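(* Let $\mathbb{K}$ be an infinite field and let $f_1,\dots,f_m:\mathbb{K}^{n_1}\times\cdots\times\mathbb{K}^{n_d}\to\mathbb{K}$ be polynomial functions of degree at most $1$ in each block of variables (i.e. multi-affine). Let $c_1,\dots,c_m\in\mathbb{K}$ and let $\mathsf{v}\in\mathbb{K}^{n_1}\times\cdots\times\mathbb{K}^{n_d}$ satisfy $(f_1(\mathsf{v}),\dots,f_m(\mathsf{v}))=(c_1,\dots,c_m)$. Put $Z\coloneqq\{\mathsf{w}\in\mathbb{K}^{n_1}\times\cdots\times\mathbb{K}^{n_d}: (f_1(\mathsf{w}),\dots,f_m(\mathsf{w}))=(c_1,\dots,c_m)\}$. Then there exists a subset $W\subseteq Z$ such that (a) $\mathsf{v}\in\overline{W}$; (b) $\overline{W}$ is irreducible; (c) $\operatorname{codim}\overline{W}\le 2^d m$ (codimension in $\overline{\mathbb{K}}^{n_1+\cdots+n_d}$).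
   Context: A function $f:\mathbb{K}^{n_1}\times\cdots\times\mathbb{K}^{n_d}\to\mathbb{K}$ is multi-affine (written $\operatorname{mdeg} f\le(1,\dots,1)$) if it is a polynomial function such that, for every $j\in[d]$ and every fixed choice of the other arguments $\mathsf{v}_s\in\mathbb{K}^{n_s}$ ($s\ne j$), the map $x_j\mapsto f(\mathsf{v}_1,\dots,x_j,\dots,\mathsf{v}_d)$ is a polynomial of degree at most $1$ on $\mathbb{K}^{n_j}$. For an infinite field $\mathbb{K}$ and a subset $S\subseteq\mathbb{K}^n$, $\overline{S}\subseteq\overline{\mathbb{K}}^n$ denotes the set of common zeros in $\overline{\mathbb{K}}^n$ of all polynomials in $\mathbb{K}[x_1,\dots,x_n]$ that vanish on $S$; codimension is $n-\dim$, computed for Zariski closed subsets of $\overline{\mathbb{K}}^n$. *)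

(* Defs.v *)
From mathcomp Require Import all_boot all_order all_algebra.
From mathcomp Require Import mpoly.
Set Implicit Arguments.
Unset Strict Implicit.
Unset Printing Implicit Defensive.
Import GRing.Theory.
Local Open Scope ring_scope.

(* World: plain MathComp + multinomials.
   A point of K^{n_1} x ... x K^{n_d} is a flat function 'I_N -> K with
   N = \sum_(j < d) n j; coordinate i of block j is x (tagnat.Rank j i). *)

Definition totdim (d : nat) (n : 'I_d -> nat) : nat := (\sum_(j < d) n j)%N.

Definition bidx (d : nat) (n : 'I_d -> nat) (j : 'I_d) (i : 'I_(n j))
  : 'I_(totdim n) := @tagnat.Rank d n j i.

Definition is_polyfun (K : fieldType) (N : nat) (f : ('I_N -> K) -> K) : Prop :=
  exists p : {mpoly K[N]}, forall x, f x = p.@[x].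

Definition multi_affine (K : fieldType) (d : nat) (n : 'I_d -> nat)
  (f : ('I_(totdim n) -> K) -> K) : Prop :=
  is_polyfun f /\
  forall (j : 'I_d) (x : 'I_(totdim n) -> K),
    exists (a : 'I_(n j) -> K) (b : K),
      forall y : 'I_(totdim n) -> K,
        (forall (j' : 'I_d) (i : 'I_(n j')), j' != j ->
            y (@bidx d n j' i) = x (@bidx d n j' i)) ->
        f y = b + \sum_(i < n j) a i * y (@bidx d n j i).

Definition is_alg_closure (K : fieldType) (L : closedFieldType)
  (iota : {rmorphism K -> L}) : Prop :=
  forall z : L, exists p : {poly K}, p != 0 /\ root (map_poly iota p) z.

Definition zcl (K : fieldType) (L : closedFieldType) (iota : {rmorphism K -> L})
  (N : nat) (S : ('I_N -> K) -> Prop) : ('I_N -> L) -> Prop :=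
  fun z => forall p : {mpoly K[N]},
    (forall x, S x -> p.@[x] = 0) -> (map_mpoly iota p).@[z] = 0.

Definition zclosed (L : closedFieldType) (N : nat) (V : ('I_N -> L) -> Prop)
  : Prop :=
  exists P : {mpoly L[N]} -> Prop,
    forall z, V z <-> (forall p, P p -> p.@[z] = 0).

Definition psubset (T : Type) (A B : T -> Prop) : Prop := forall z, A z -> B z.

Definition zirreducible (L : closedFieldType) (N : nat)
  (V : ('I_N -> L) -> Prop) : Prop :=
  zclosed V /\ (exists z, V z) /\
  forall A B : ('I_N -> L) -> Prop, zclosed A -> zclosed B ->
    (forall z, V z -> A z \/ B z) -> psubset V A \/ psubset V B.

(* dim V >= r : there is a chain Z_0 < Z_1 < ... < Z_r of irreducible closed
   subsets of V (Krull dimension of V with the Zariski topology) *)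
Definition zdim_ge (L : closedFieldType) (N : nat) (V : ('I_N -> L) -> Prop)
  (r : nat) : Prop :=
  exists Zs : nat -> ('I_N -> L) -> Prop,
    (forall i, (i <= r)%N -> zirreducible (Zs i) /\ psubset (Zs i) V) /\
    (forall i, (i < r)%N ->
       psubset (Zs i) (Zs i.+1) /\ ~ psubset (Zs i.+1) (Zs i)).

(* codim V <= k, i.e. N - dim V <= k, i.e. dim V >= r for some r with N <= r+k *)
Definition zcodim_le (L : closedFieldType) (N : nat) (V : ('I_N -> L) -> Prop)
  (k : nat) : Prop :=
  exists r : nat, zdim_ge V r /\ (N <= r + k)%N.

(* Main.v *)
Require Import Defs.
From mathcomp Require Import all_boot all_order all_algebra.
From mathcomp Require Import mpoly.
From Stdlib Require Import Classical.
From mathcomp Require Import ring zify.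
From Stdlib Require Import FunctionalExtensionality.
Set Implicit Arguments.
Unset Strict Implicit.
Unset Printing Implicit Defensive.
Import GRing.Theory.
Local Open Scope ring_scope.

Section Infinite.
Variable K : fieldType.
Hypothesis Kinf : forall s : seq K, exists x : K, x \notin s.

Lemma inf_uniq k : exists l : seq K, uniq l /\ size l = k.
Proof.
elim: k => [|k [l [ul sl]]]; first by exists [::].
have [x xl] := Kinf l; exists (x :: l); by rewrite /= xl ul sl.
Qed.

Lemma poly_nonroot (Q : {poly K}) (s : seq K) :
  Q != 0 -> exists t, t \notin s /\ Q.[t] != 0.
Proof.
move=> Q0; have [l [ul sl]] := inf_uniq (size Q + size s).
pose l' := [seq x <- l | x \notin s].
case: (boolP (all (root Q) l')) => [allr|].
  have := max_poly_roots Q0 allr (filter_uniq _ ul).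
  have h1 := count_predC (fun x => x \notin s) l.
  have h2 : (count (predC (fun x => x \notin s)) l <= size s)%N.
    rewrite -size_filter; apply: uniq_leq_size; first exact: filter_uniq.
    by move=> x; rewrite mem_filter /= negbK => /andP[].
  rewrite size_filter; move: h1 h2; rewrite sl => h1 h2 h3.
  have : (size Q <= count (fun x => x \notin s) l)%N.
    rewrite -(leq_add2r (count (predC (fun x => x \notin s)) l)) h1.
    by rewrite leq_add2l.
  by rewrite leqNgt h3.
rewrite -has_predC => /hasP[x]; rewrite mem_filter => /andP[xs _] /= rx.
by exists x.
Qed.

Variable N : nat.

Definition lpt (x1 x2 : 'I_N -> K) (t : K) : 'I_N -> K :=
  fun j => x1 j + t * (x2 j - x1 j).

Lemma linepoly (p : {mpoly K[N]}) x1 x2 :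
  exists Q : {poly K}, forall t, Q.[t] = p.@[lpt x1 x2 t].
Proof.
exists (mmap polyC (fun j => (x1 j)%:P + (x2 j - x1 j)%:P * 'X) p) => t.
rewrite /mmap mevalE horner_sum; apply: eq_bigr => m _.
rewrite hornerM hornerC /mmap1 horner_prod; congr (_ * _).
apply: eq_bigr => i _; rewrite horner_exp; congr (_ ^+ _).
by rewrite hornerD hornerC hornerM hornerC hornerX /lpt mulrC.
Qed.

Definition slice (T : pred 'I_N) (a : 'I_N -> K) (x : 'I_N -> K) : Prop :=
  forall j, T j -> x j = a j.

Lemma slice_irr T a (P1 P2 : {mpoly K[N]}) :
  (forall x, slice T a x -> P1.@[x] * P2.@[x] = 0) ->
  (forall x, slice T a x -> P1.@[x] = 0) \/ (forall x, slice T a x -> P2.@[x] = 0).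
Proof.
move=> H; case: (classic (forall x, slice T a x -> P1.@[x] = 0)) => [h|h]; first by left.
right => x2 s2; apply: NNPP => n2.
have [x1 h1] := not_all_ex_not _ _ h.
have [s1 n1] := imply_to_and _ _ h1.
have [Q1 HQ1] := linepoly P1 x1 x2.
have [Q2 HQ2] := linepoly P2 x1 x2.
have sl t : slice T a (lpt x1 x2 t).
  by move=> j Tj; rewrite /lpt s1 // s2 // subrr mulr0 addr0.
have e0 : lpt x1 x2 0 =1 x1 by move=> j; rewrite /lpt mul0r addr0.
have e1 : lpt x1 x2 1 =1 x2 by move=> j; rewrite /lpt mul1r addrC subrK.
have nQ1 : Q1 != 0.
  by apply/negP => /eqP Q0; apply: n1; rewrite -(meval_eq _ e0) -HQ1 Q0 horner0.
have nQ2 : Q2 != 0.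
  by apply/negP => /eqP Q0; apply: n2; rewrite -(meval_eq _ e1) -HQ2 Q0 horner0.
have [t [_ ht]] := poly_nonroot [::] (mulf_neq0 nQ1 nQ2).
by move: ht; rewrite hornerM HQ1 HQ2 H // eqxx.
Qed.


Implicit Types (g : {mpoly K[N]}) (F G : ('I_N -> K) -> K).

Definition reg g F := exists (A : {mpoly K[N]}) (D : nat),
  forall x, g.@[x] != 0 -> g.@[x] ^+ D * F x = A.@[x].

Lemma reg_cst g c : reg g (fun _ => c).
Proof. by exists c%:MP, 0%N => x _; rewrite expr0 mul1r mevalC. Qed.

Lemma reg_X g j : reg g (fun x => x j).
Proof. by exists 'X_j, 0%N => x _; rewrite expr0 mul1r mevalXU. Qed.

Lemma reg_poly g (p : {mpoly K[N]}) : reg g (fun x => p.@[x]).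
Proof. by exists p, 0%N => x _; rewrite expr0 mul1r. Qed.

Lemma reg_add g F G : reg g F -> reg g G -> reg g (fun x => F x + G x).
Proof.
move=> [A1 [D1 H1]] [A2 [D2 H2]].
exists (g ^+ D2 * A1 + g ^+ D1 * A2), (D1 + D2)%N => x gx.
by rewrite mevalD !mevalM !rmorphXn /= -H1 // -H2 // exprD; ring.
Qed.

Lemma reg_mul g F G : reg g F -> reg g G -> reg g (fun x => F x * G x).
Proof.
move=> [A1 [D1 H1]] [A2 [D2 H2]].
exists (A1 * A2), (D1 + D2)%N => x gx.
by rewrite mevalM -H1 // -H2 // exprD; ring.
Qed.

Lemma reg_opp g F : reg g F -> reg g (fun x => - F x).
Proof.
move=> [A [D H]]; exists (- A), D => x gx.
by rewrite mevalN -H // mulrN.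
Qed.

Lemma reg_ext g F G : reg g F -> (forall x, g.@[x] != 0 -> F x = G x) -> reg g G.
Proof.
move=> [A [D H]] e; exists A, D => x gx; by rewrite -e // H.
Qed.

Lemma reg_sum g (I : Type) (r : seq I) (P : pred I) (Fs : I -> ('I_N -> K) -> K) :
  (forall i, reg g (Fs i)) -> reg g (fun x => \sum_(i <- r | P i) Fs i x).
Proof.
move=> H; elim: r => [|i r IH].
  by apply: reg_ext (reg_cst g 0) _ => x _; rewrite big_nil.
case Pi: (P i).
  by apply: reg_ext (reg_add (H i) IH) _ => x _; rewrite big_cons Pi.
by apply: reg_ext IH _ => x _; rewrite big_cons Pi.
Qed.

Lemma reg_prod g (I : Type) (r : seq I) (P : pred I) (Fs : I -> ('I_N -> K) -> K) :
  (forall i, reg g (Fs i)) -> reg g (fun x => \prod_(i <- r | P i) Fs i x).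
Proof.
move=> H; elim: r => [|i r IH].
  by apply: reg_ext (reg_cst g 1) _ => x _; rewrite big_nil.
case Pi: (P i).
  by apply: reg_ext (reg_mul (H i) IH) _ => x _; rewrite big_cons Pi.
by apply: reg_ext IH _ => x _; rewrite big_cons Pi.
Qed.

Lemma reg_exp g F k : reg g F -> reg g (fun x => F x ^+ k).
Proof.
move=> H; elim: k => [|k IH].
  by apply: reg_ext (reg_cst g 1) _ => x _; rewrite expr0.
by apply: reg_ext (reg_mul H IH) _ => x _; rewrite exprS.
Qed.

Lemma reg_mono g h F : reg g F -> reg (g * h) F.
Proof.
move=> [A [D H]]; exists (h ^+ D * A), D => x; rewrite mevalM => gh.
have gx : g.@[x] != 0 by move: gh; rewrite mulf_eq0 negb_or => /andP[].
by rewrite mevalM rmorphXn /= -H // exprMn; ring.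
Qed.

Lemma reg_inv g F (A : {mpoly K[N]}) D :
  (forall x, g.@[x] != 0 -> g.@[x] ^+ D * F x = A.@[x]) ->
  reg (g * A) (fun x => (F x)^-1).
Proof.
move=> H; exists (g ^+ D.+1), 1%N => x; rewrite mevalM => gA.
have [gx Ax] : g.@[x] != 0 /\ A.@[x] != 0.
  by move: gA; rewrite mulf_eq0 negb_or => /andP[].
have Fx : F x != 0.
  by apply/negP => /eqP F0; move: Ax; rewrite -H // F0 mulr0 eqxx.
by rewrite expr1 rmorphXn /= -H // exprS; field.
Qed.

Lemma reg_meval g (Psi : ('I_N -> K) -> 'I_N -> K) (p : {mpoly K[N]}) :
  (forall j, reg g (fun x => Psi x j)) -> reg g (fun x => p.@[Psi x]).
Proof.
move=> H; apply: reg_ext (_ : reg g (fun x =>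
   \sum_(m <- msupp p) p@_m * \prod_i (Psi x i) ^+ m i)) _.
  apply: reg_sum => m; apply: reg_mul; first exact: reg_cst.
  by apply: reg_prod => i; apply: reg_exp.
by move=> x _; rewrite mevalE.
Qed.

Lemma reg_det g r (A : ('I_N -> K) -> 'M[K]_r) :
  (forall i j, reg g (fun x => A x i j)) -> reg g (fun x => \det (A x)).
Proof.
move=> H; apply: reg_sum => s; apply: reg_mul; first exact: reg_cst.
by apply: reg_prod.
Qed.

Lemma reg1 F : reg 1 F -> exists A : {mpoly K[N]}, forall x, F x = A.@[x].
Proof.
move=> [A [D H]]; exists A => x; rewrite -H ?meval1 ?expr1n ?mul1r //.
exact: oner_neq0.
Qed.

Definition Kprime (S : ('I_N -> K) -> Prop) := forall p q : {mpoly K[N]},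
  (forall x, S x -> p.@[x] * q.@[x] = 0) ->
  (forall x, S x -> p.@[x] = 0) \/ (forall x, S x -> q.@[x] = 0).

Definition img T a g (Phi : ('I_N -> K) -> 'I_N -> K) (y : 'I_N -> K) : Prop :=
  exists x, slice T a x /\ g.@[x] != 0 /\ y = Phi x.

Lemma img_prime T a g Phi :
  (forall j, reg g (fun x => Phi x j)) ->
  (exists x, slice T a x /\ g.@[x] != 0) -> Kprime (img T a g Phi).
Proof.
move=> Hr [x0 [s0 g0]] p q Hpq.
have [Ap [Dp Hp]] := reg_meval p Hr.
have [Aq [Dq Hq]] := reg_meval q Hr.
have H1 : forall x, slice T a x -> g.@[x] * (Ap * Aq).@[x] = 0.
  move=> x sx; have [->|gx] := eqVneq g.@[x] 0; first by rewrite mul0r.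
  rewrite mevalM -Hp // -Hq //.
  have e : p.@[Phi x] * q.@[Phi x] = 0 by apply: Hpq; exists x.
  by rewrite mulrACA e mulr0 mulr0.
case: (slice_irr H1) => [h|h]; first by move: g0; rewrite h // eqxx.
have H2 : forall x, slice T a x -> Ap.@[x] * Aq.@[x] = 0.
  by move=> x sx; rewrite -mevalM h.
case: (slice_irr H2) => [h2|h2]; [left|right] => y [x [sx [gx ->]]].
  have := Hp x gx; rewrite h2 // => /eqP; rewrite mulf_eq0 expf_eq0 (negbTE gx).
  by rewrite andbF /= => /eqP.
have := Hq x gx; rewrite h2 // => /eqP; rewrite mulf_eq0 expf_eq0 (negbTE gx).
by rewrite andbF /= => /eqP.
Qed.

End Infinite.

Section Closure.
Variables (K : fieldType) (L : closedFieldType) (iota : {rmorphism K -> L}) (N : nat).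

Lemma map_meval (p : {mpoly K[N]}) (x : 'I_N -> K) :
  (map_mpoly iota p).@[fun i => iota (x i)] = iota (p.@[x]).
Proof.
rewrite /map_mpoly /mmap raddf_sum mevalE rmorph_sum /=; apply: eq_bigr => m _.
rewrite mevalM /= mevalC rmorphM /=; congr (_ * _).
rewrite /mmap1 rmorph_prod rmorph_prod /=; apply: eq_bigr => i _.
by rewrite !rmorphXn /= mevalXU.
Qed.

Definition indep s (e : 'I_s -> L) :=
  forall c : 'I_s -> K, \sum_i iota (c i) * e i = 0 -> forall i, c i = 0.

Lemma unlift_widen s (i : 'I_s) : unlift ord_max (widen_ord (leqnSn s) i) = Some i.
Proof.
have -> : widen_ord (leqnSn s) i = lift ord_max i by apply: val_inj; rewrite /= /bump leqNgt ltn_ord add0n.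
by rewrite liftK.
Qed.

Lemma basis_list (ls : seq L) : exists s (e : 'I_s -> L) (kap : L -> 'I_s -> K),
  indep e /\ forall l, l \in ls -> l = \sum_i iota (kap l i) * e i.
Proof.
elim: ls => [|l ls [s [e [kap [ind rep]]]]].
  by exists 0%N, (fun _ => 0), (fun _ _ => 0); split => // c _ [].
case: (classic (exists c : 'I_s -> K, l = \sum_i iota (c i) * e i)) => [[c hc]|nc].
  exists s, e, (fun x => if x == l then c else kap x); split => // x.
  rewrite in_cons; case: eqP => [-> _ //|_ /= ]; exact: rep.
pose e' (i : 'I_s.+1) := if unlift ord_max i is Some j then e j else l.
pose kap' (x : L) (i : 'I_s.+1) := if unlift ord_max i is Some j
   then (if x == l then 0 else kap x j) else (if x == l then 1 else 0).
exists s.+1, e', kap'; split.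
  move=> c; rewrite big_ord_recr /= /e' unlift_none.
  under eq_bigr => i _ do rewrite unlift_widen.
  move=> H.
  have cm : c ord_max = 0.
    apply: NNPP => cn; apply: nc.
    exists (fun i => - c (widen_ord (leqnSn s) i) / c ord_max).
    apply: (mulfI (_ : iota (c ord_max) != 0)); first by rewrite fmorph_eq0; apply/eqP.
    have -> : iota (c ord_max) * l =
       - \sum_i iota (c (widen_ord (leqnSn s) i)) * e i.
      by apply/eqP; rewrite -addr_eq0 addrC H.
    rewrite mulr_sumr -sumrN; apply: eq_bigr => i _; rewrite !rmorphM rmorphN /= fmorphV /=.
    by field; rewrite fmorph_eq0; apply/eqP.
  move: H; rewrite cm rmorph0 mul0r addr0 => H i.
  case: (unliftP ord_max i) => [j ->|->] //.
  have -> : lift ord_max j = widen_ord (leqnSn s) j.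
    by apply: val_inj; rewrite /= /bump leqNgt ltn_ord add0n.
  exact: (ind (fun j => c (widen_ord (leqnSn s) j)) H j).
move=> x; rewrite in_cons big_ord_recr /= /kap' /e' unlift_none.
under eq_bigr => i _ do rewrite unlift_widen.
case: eqP => [-> _|_ /= xl].
  by rewrite big1 ?add0r ?rmorph1 ?mul1r // => i _; rewrite rmorph0 mul0r.
by rewrite rmorph0 mul0r addr0; apply: rep.
Qed.

Lemma decomp (al : {mpoly L[N]}) : exists s (e : 'I_s -> L) (bl : 'I_s -> {mpoly K[N]}),
  indep e /\ forall z, al.@[z] = \sum_i e i * (map_mpoly iota (bl i)).@[z].
Proof.
have [s [e [kap [ind rep]]]] := basis_list [seq al@_m | m <- msupp al].
exists s, e, (fun i => \sum_(m <- msupp al) kap al@_m i *: 'X_[m]); split => // z.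
under eq_bigr => i _ do rewrite (raddf_sum (map_mpoly iota)) (raddf_sum (meval z)) mulr_sumr.
rewrite exchange_big mevalE /= big_seq [RHS]big_seq; apply: eq_bigr => m mm.
rewrite [X in X * _ = _](rep al@_m); last by apply/mapP; exists m.
rewrite mulr_suml; apply: eq_bigr => i _.
by rewrite map_mpolyZ mevalZ map_mpolyX mevalX; ring.
Qed.

Lemma zcl_K (S : ('I_N -> K) -> Prop) x : S x -> zcl iota S (fun i => iota (x i)).
Proof. by move=> Sx p Hp; rewrite map_meval Hp // rmorph0. Qed.

Lemma zcl_mono (S S' : ('I_N -> K) -> Prop) :
  (forall x, S x -> S' x) -> psubset (zcl iota S) (zcl iota S').
Proof. by move=> H z Hz p Hp; apply: Hz => x Sx; apply: Hp; apply: H. Qed.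

Lemma zcl_closed (S : ('I_N -> K) -> Prop) : zclosed (zcl iota S).
Proof.
exists (fun q => exists p, (forall x, S x -> p.@[x] = 0) /\ q = map_mpoly iota p) => z.
split=> [Hz q [p [Hp ->]]|H p Hp]; first exact: Hz.
by apply: H; exists p.
Qed.

Lemma zcl_irr (S : ('I_N -> K) -> Prop) :
  (exists x, S x) -> Kprime S -> zirreducible (zcl iota S).
Proof.
move=> [x0 Sx0] KS; split; first exact: zcl_closed.
split; first by exists (fun i => iota (x0 i)); apply: zcl_K.
move=> A B [PA HA] [PB HB] hAB.
case: (classic (psubset (zcl iota S) A)) => [h|nA]; first by left.
case: (classic (psubset (zcl iota S) B)) => [h|nB]; first by right.
exfalso.
have bad : forall (C : ('I_N -> L) -> Prop) (PC : {mpoly L[N]} -> Prop),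
   (forall z, C z <-> (forall p, PC p -> p.@[z] = 0)) ->
   ~ psubset (zcl iota S) C ->
   exists al, PC al /\ exists s (e : 'I_s -> L) (bl : 'I_s -> {mpoly K[N]}),
   indep e /\ (forall z, al.@[z] = \sum_i e i * (map_mpoly iota (bl i)).@[z]) /\
   exists i, ~ (forall x, S x -> (bl i).@[x] = 0).
  move=> C PC HC nC.
  have [z1 hz1] : exists z, ~ (zcl iota S z -> C z) by apply: not_all_ex_not.
  have [Vz1 nCz1] := imply_to_and _ _ hz1.
  have : ~ (forall p, PC p -> p.@[z1] = 0) by move=> h; apply: nCz1; apply/HC.
  move=> /not_all_ex_not [al h]; have [PCal nal] := imply_to_and _ _ h.
  have [s [e [bl [ind de]]]] := decomp al.
  exists al; split => //; exists s, e, bl; split => //; split => //.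
  apply: NNPP => nex; apply: nal; rewrite de big1 // => i _.
  have hi : forall x, S x -> (bl i).@[x] = 0.
    by apply: NNPP => hh; apply: nex; exists i.
  by rewrite (Vz1 (bl i) hi) mulr0.
have [al [PAal [s [e [bl [ind [de [i ni]]]]]]]] := bad A PA HA nA.
have [be [PBbe [s' [e' [bl' [ind' [de' [j nj]]]]]]]] := bad B PB HB nB.
have H : forall x, S x -> (bl i).@[x] * (bl' j).@[x] = 0.
  move=> x Sx; case: (hAB _ (zcl_K Sx)) => [/HA h|/HB h].
    have := h al PAal; rewrite de.
    under eq_bigr => k _ do rewrite map_meval mulrC.
    by move=> /ind ->; rewrite mul0r.
  have := h be PBbe; rewrite de'.
  under eq_bigr => k _ do rewrite map_meval mulrC.
  by move=> /ind' ->; rewrite mulr0.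
by case: (KS _ _ H).
Qed.

End Closure.

Section Chain.
Variables (K : fieldType) (L : closedFieldType) (iota : {rmorphism K -> L}) (N : nat).
Hypothesis Kinf : forall s : seq K, exists x : K, x \notin s.

Lemma chain_dim (g : {mpoly K[N]}) (Phi : ('I_N -> K) -> 'I_N -> K) (s : seq 'I_N) x0 :
  uniq s -> (forall j, reg g (fun x => Phi x j)) ->
  (forall j, j \in s -> forall x, Phi x j = x j) -> g.@[x0] != 0 ->
  zdim_ge (zcl iota (img pred0 x0 g Phi)) (size s).
Proof.
move=> us Hr Hs g0.
exists (fun i => zcl iota (img (fun j => j \in drop i s) x0 g Phi)); split.
  move=> i _; split.
    apply: zcl_irr; first by exists (Phi x0), x0.
    by apply: img_prime => //; exists x0.
  by apply: zcl_mono => y [x [_ [gx ->]]]; exists x.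
move=> i lti; split.
  apply: zcl_mono => y [x [sx [gx ->]]]; exists x; split => // j jd.
  apply: sx; move: jd; rewrite -addn1 addnC -drop_drop; exact: mem_drop.
have [j [rest E]] : exists j rest, drop i s = j :: rest.
  case E: (drop i s) => [|j rest]; last by exists j, rest.
  by move: (congr1 size E); rewrite size_drop /=; move/eqP; rewrite subn_eq0 leqNgt lti.
have Er : drop i.+1 s = rest by rewrite -addn1 addnC -drop_drop E /= drop0.
have js : j \in s by rewrite -(cat_take_drop i s) mem_cat E mem_head orbT.
have jr : j \notin rest.
  by have := drop_uniq i us; rewrite E /= => /andP[].
pose x2 := fun k => if k == j then x0 k + 1 else x0 k.
have [Q HQ] := linepoly g x0 x2.
have Q0 : Q != 0.
  apply/negP => /eqP Q0; move: g0; rewrite -(@meval_eq _ _ (lpt x0 x2 0)) ?eqxx //.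
    by rewrite -HQ Q0 horner0 eqxx.
  by move=> k; rewrite /lpt mul0r addr0.
have [t [t0 gt]] := poly_nonroot Kinf [:: 0] Q0.
move: gt; rewrite HQ => gt.
set y := lpt x0 x2 t.
have yj : y j = x0 j + t by rewrite /y /lpt /x2 eqxx /=; ring.
move=> H.
have Hz : zcl iota (img (fun k => k \in drop i s) x0 g Phi) (fun k => iota (Phi y k)).
  apply: H; apply: zcl_K; exists y; split => //; rewrite Er => k kr.
  rewrite /y /lpt /x2; have -> : (k == j) = false.
    by apply/negP => /eqP ekj; move: jr; rewrite -ekj kr.
  by rewrite subrr mulr0 addr0.
have := Hz ('X_j - (x0 j)%:MP).
rewrite map_meval mevalB mevalXU mevalC Hs // yj addrAC subrr add0r.
move: t0; rewrite in_cons in_nil orbF => t0 h.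
have : iota t != 0 by rewrite fmorph_eq0.
rewrite h ?eqxx // => z [x [sx [gx ->]]].
by rewrite mevalB mevalXU mevalC Hs // sx ?subrr // E mem_head.
Qed.

End Chain.

Section Blocks.
Variables (d : nat) (n : 'I_d -> nat).
Local Notation N := (totdim n).

Definition blk (j : 'I_N) : 'I_d := tagnat.sig1 j.

Lemma blk_bidx (k : 'I_d) (i : 'I_(n k)) : blk (bidx i) = k.
Proof. exact: tagnat.Rank1K. Qed.

Lemma bidx_inj (k : 'I_d) : injective (@bidx d n k).
Proof.
move=> i i' h; have := tagnat.eq_Rank i i'; rewrite /bidx in h.
rewrite h eqxx => /esym; rewrite eqxx /= => /eqP; exact: val_inj.
Qed.

Lemma blk_ex (j : 'I_N) : exists i : 'I_(n (blk j)), bidx i = j.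
Proof. by exists (tagnat.sig2 j); exact: tagnat.sig2K. Qed.

Lemma sum_blk (K : nzRingType) (k : 'I_d) (G : 'I_N -> K) :
  \sum_(i < n k) G (bidx i) = \sum_(j | blk j == k) G j.
Proof.
rewrite -(big_imset _ (in2W (@bidx_inj k))) /=.
apply: eq_bigl => j; apply/imsetP/eqP => [[i _ ->]|e]; first exact: blk_bidx.
have [i hi] := blk_ex j; move: i hi; rewrite e => i hi; by exists i.
Qed.

End Blocks.

Section RegM.
Variables (K : fieldType) (N : nat).
Implicit Types (g : {mpoly K[N]}).

Definition regM g p q (A : ('I_N -> K) -> 'M[K]_(p, q)) :=
  forall i j, reg g (fun x => A x i j).

Lemma regM_cst g p q (B : 'M[K]_(p, q)) : regM g (fun _ => B).
Proof. by move=> i j; exact: reg_cst. Qed.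

Lemma regM_add g p q (A B : ('I_N -> K) -> 'M[K]_(p, q)) :
  regM g A -> regM g B -> regM g (fun x => A x + B x).
Proof. by move=> hA hB i j; apply: reg_ext (reg_add (hA i j) (hB i j)) _ => x _; rewrite mxE. Qed.

Lemma regM_opp g p q (A : ('I_N -> K) -> 'M[K]_(p, q)) :
  regM g A -> regM g (fun x => - A x).
Proof. by move=> hA i j; apply: reg_ext (reg_opp (hA i j)) _ => x _; rewrite mxE. Qed.

Lemma regM_mul g p q s (A : ('I_N -> K) -> 'M[K]_(p, q)) (B : ('I_N -> K) -> 'M[K]_(q, s)) :
  regM g A -> regM g B -> regM g (fun x => A x *m B x).
Proof.
move=> hA hB i j; apply: reg_ext (_ : reg g (fun x => \sum_l A x i l * B x l j)) _.
  by apply: reg_sum => l; apply: reg_mul.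
by move=> x _; rewrite mxE.
Qed.

Lemma regM_scale g p q (a : ('I_N -> K) -> K) (A : ('I_N -> K) -> 'M[K]_(p, q)) :
  reg g a -> regM g A -> regM g (fun x => a x *: A x).
Proof. by move=> ha hA i j; apply: reg_ext (reg_mul ha (hA i j)) _ => x _; rewrite mxE. Qed.

Lemma regM_adj g r (A : ('I_N -> K) -> 'M[K]_r) :
  regM g A -> regM g (fun x => \adj (A x)).
Proof.
move=> hA i j; apply: reg_ext
  (_ : reg g (fun x => (-1) ^+ (j + i) * \det (row' j (col' i (A x))))) _.
  apply: reg_mul; first exact: reg_cst.
  by apply: reg_det => a b; apply: reg_ext (hA _ _) _ => x _; rewrite !mxE.
by move=> x _; rewrite mxE.
Qed.

Lemma regM_ext g p q (A B : ('I_N -> K) -> 'M[K]_(p, q)) :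
  regM g A -> (forall x, g.@[x] != 0 -> A x = B x) -> regM g B.
Proof. by move=> hA e i j; apply: reg_ext (hA i j) _ => x gx; rewrite e. Qed.

Lemma regM_mono g h p q (A : ('I_N -> K) -> 'M[K]_(p, q)) : regM g A -> regM (g * h) A.
Proof. by move=> hA i j; apply: reg_mono. Qed.

End RegM.

Lemma max_exists (T : Type) (P : T -> Prop) (F : T -> nat) (b : nat) :
  (exists t, P t) -> (forall t, P t -> (F t <= b)%N) ->
  exists t0, P t0 /\ forall t, P t -> (F t <= F t0)%N.
Proof.
move=> [t1 P1] hb; apply: NNPP => H.
have stp : forall t0, P t0 -> exists t, P t /\ (F t0 < F t)%N.
  move=> t0 P0; apply: NNPP => H2; apply: H; exists t0; split => // t Pt.
  by rewrite leqNgt; apply/negP => lt; apply: H2; exists t.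
have : forall j, exists t, P t /\ (j <= F t)%N.
  elim=> [|j [t [Pt jt]]]; first by exists t1.
  have [t' [Pt' lt]] := stp t Pt; exists t'; split => //.
  exact: leq_ltn_trans jt lt.
move=> /(_ b.+1) [t [Pt]]; by rewrite ltnNge hb.
Qed.

Section Main.
Variables (K : fieldType).
Hypothesis Kinf : forall s : seq K, exists x : K, x \notin s.
Variables (d : nat) (n : 'I_d -> nat) (m : nat).
Local Notation N := (totdim n).
Variable f : 'I_m -> ('I_N -> K) -> K.
Hypothesis f_ma : forall k, multi_affine (f k).
Variables (c : 'I_m -> K) (v : 'I_N -> K).
Hypothesis hv : forall k, f k v = c k.

Definition vset (P : pred 'I_d) (y : 'I_N -> K) : 'I_N -> K :=
  fun j => if P (blk j) then v j else y j.
Definition bmp (z : 'I_N -> K) (j : 'I_N) : 'I_N -> K :=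
  fun k => if k == j then z j + 1 else z k.

Lemma aff e kk x y : (forall j, blk j != kk -> y j = x j) ->
  f e y = f e (vset (pred1 kk) x) + \sum_(j | blk j == kk)
    (f e (bmp (vset (pred1 kk) x) j) - f e (vset (pred1 kk) x)) * (y j - v j).
Proof.
move=> hy; have [_ H] := f_ma e; have [a [b Hab]] := H kk x.
set x' := vset (pred1 kk) x.
have cond : forall z, (forall j, blk j != kk -> z j = x j) ->
    f e z = b + \sum_(i < n kk) a i * z (bidx i).
  move=> z hz; apply: Hab => j' i ne; apply: hz; by rewrite blk_bidx.
have cx' : forall j, blk j != kk -> x' j = x j.
  by move=> j ne; rewrite /x' /vset /= (negbTE ne).
have ca : forall i0, f e (bmp x' (bidx i0)) - f e x' = a i0.
  move=> i0; rewrite (cond _ cx') cond; last first.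
    move=> j ne; rewrite /bmp; case: eqP => [ej|_]; last exact: cx'.
    by move: ne; rewrite ej blk_bidx eqxx.
  rewrite opprD addrACA subrr add0r -sumrB (bigD1 i0) //= big1 ?addr0.
    by rewrite /bmp eqxx; ring.
  move=> i ne; rewrite /bmp; case: eqP => [/bidx_inj e'|_]; last by rewrite subrr.
  by move: ne; rewrite e' eqxx.
rewrite -sum_blk; under eq_bigr => i _ do rewrite ca.
rewrite (cond _ hy) (cond _ cx') -addrA; congr (_ + _).
rewrite -big_split /=; apply: eq_bigr => i _.
by rewrite /x' /vset /= blk_bidx eqxx; ring.
Qed.


Lemma reg_f g e (Psi : ('I_N -> K) -> 'I_N -> K) :
  (forall j, reg g (fun x => Psi x j)) -> reg g (fun x => f e (Psi x)).
Proof.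
move=> H; have [[p hp] _] := f_ma e.
by apply: reg_ext (reg_meval p H) _ => x _; rewrite hp.
Qed.

Lemma reg_vset g P (Psi : ('I_N -> K) -> 'I_N -> K) j :
  (forall j, reg g (fun x => Psi x j)) -> reg g (fun x => vset P (Psi x) j).
Proof. by move=> H; rewrite /vset; case: (P (blk j)); [exact: reg_cst|]. Qed.

Lemma reg_bmp g (Psi : ('I_N -> K) -> 'I_N -> K) j :
  (forall j, reg g (fun x => Psi x j)) -> forall l, reg g (fun x => bmp (Psi x) j l).
Proof.
move=> H l; rewrite /bmp; case: (l == j); last exact: H.
by apply: reg_add => //; exact: reg_cst.
Qed.

Record stage (k : nat) (g : {mpoly K[N]}) (Phi : ('I_N -> K) -> 'I_N -> K)
    (I : seq 'I_N) : Prop := Stage {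
  st_eq : forall x, g.@[x] != 0 -> forall e, f e (vset (fun b => k <= b)%N (Phi x)) = c e;
  st_reg : forall j, reg g (fun x => Phi x j);
  st_id : forall j x, (k <= blk j)%N -> Phi x j = x j;
  st_dep : forall x x', (forall j, (blk j < k)%N -> x j = x' j) ->
     g.@[x] = g.@[x'] /\ forall j, (blk j < k)%N -> Phi x j = Phi x' j;
  st_ne : exists x0, g.@[x0] != 0;
  st_cl : forall p : {mpoly K[N]}, (forall x, g.@[x] != 0 -> p.@[Phi x] = 0) -> p.@[v] = 0;
  st_uniq : uniq I;
  st_free : forall j, j \in I -> forall x, Phi x j = x j;
  st_size : (N <= size I + k * m)%N;
  st_hi : forall j, (k <= blk j)%N -> j \in I
}.

Lemma stage0 : stage 0 1 (fun x => x) (enum 'I_N).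
Proof.
split.
- move=> x _ e; have -> : vset (fun b => 0 <= b)%N x = v.
    by apply: functional_extensionality => j; rewrite /vset.
  exact: hv.
- move=> j; exact: reg_X.
- by [].
- by move=> x x' _; rewrite !meval1.
- by exists (fun _ => 0); rewrite meval1 oner_neq0.
- by move=> p H; apply: H; rewrite meval1 oner_neq0.
- exact: enum_uniq.
- by move=> j _ x.
- by rewrite size_enum_ord mul0n addn0.
- by move=> j _; rewrite mem_enum.
Qed.


Definition M0 (kk : 'I_d) (y : 'I_N -> K) : 'M[K]_(m, N) :=
  \matrix_(e, j) (if blk j == kk then
     f e (bmp (vset (fun b => kk <= b)%N y) j) - f e (vset (fun b => kk <= b)%N y) else 0).

Lemma M0_reg kk g (Psi : ('I_N -> K) -> 'I_N -> K) :
  (forall j, reg g (fun x => Psi x j)) -> regM g (fun x => M0 kk (Psi x)).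
Proof.
move=> H e j; apply: reg_ext (_ : reg g (fun x => if blk j == kk then
     f e (bmp (vset (fun b => kk <= b)%N (Psi x)) j) - f e (vset (fun b => kk <= b)%N (Psi x))
     else 0)) _; last by move=> x _; rewrite mxE.
case: (blk j == kk); last exact: reg_cst.
apply: reg_add; last apply: reg_opp; apply: reg_f.
  by apply: reg_bmp => l; apply: reg_vset.
by move=> l; apply: reg_vset.
Qed.

Lemma M0_dep (kk : 'I_d) (y y' : 'I_N -> K) : (forall j, (blk j < kk)%N -> y j = y' j) -> M0 kk y = M0 kk y'.
Proof.
move=> H; rewrite /M0; have -> : vset (fun b => kk <= b)%N y = vset (fun b => kk <= b)%N y'.
  apply: functional_extensionality => j; rewrite /vset.
  by case: leqP => // lt; apply: H.
by [].
Qed.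

Lemma stage_step k g Phi I : (k < d)%N -> stage k g Phi I ->
  exists g' Phi' I', stage k.+1 g' Phi' I'.
Proof.
move=> kd st; pose kk : 'I_d := Ordinal kd.
have hkk : forall b : 'I_d, (b == kk) = (b == k :> nat) by move=> b.
have [x0 gx0 x0max] : exists2 x0 : 'I_N -> K, g.@[x0] != 0 &
    forall x : 'I_N -> K, g.@[x] != 0 -> (\rank (M0 kk (Phi x)) <= \rank (M0 kk (Phi x0)))%N.
  have [t [? ?]] := max_exists (b := m) (st_ne st) (fun x _ => rank_leq_row (M0 kk (Phi x))).
  by exists t.
set r := \rank (M0 kk (Phi x0)).
pose R := maxrankfun (M0 kk (Phi x0)).
have rfR : row_free (rowsub R (M0 kk (Phi x0))) := maxrowsub_free _.
have rkT : row_full (rowsub R (M0 kk (Phi x0)))^T.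
  by rewrite /row_full mxrank_tr.
pose J := fullrankfun rkT.
pose MR x : 'M[K]_(r, N) := rowsub R (M0 kk (Phi x)).
pose P x : 'M[K]_r := colsub J (MR x).
have PJ0 : P x0 \in unitmx.
  rewrite -unitmx_tr; have := fullrowsub_unit rkT.
  suff -> : (P x0)^T = rowsub J (rowsub R (M0 kk (Phi x0)))^T by [].
  by apply/matrixP => a b; rewrite !mxE.
pose E0 : 'M[K]_(N, r) := \matrix_(j, l) (j == J l)%:R.
have PE : forall (A : 'M[K]_(r, N)), A *m E0 = colsub J A.
  move=> A; apply/matrixP => a l; rewrite !mxE (bigD1 (J l)) //= mxE eqxx mulr1.
  by rewrite big1 ?addr0 // => j ne; rewrite mxE (negbTE ne) mulr0.
pose u x : 'cV[K]_N := \col_j (if (blk j == kk) && (j \notin codom J) then x j - v j else 0).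
pose w x : 'cV[K]_N := u x - E0 *m (invmx (P x) *m (MR x *m u x)).
pose Phi' x j := if blk j == kk then v j + w x j 0 else Phi x j.
pose D x := \det (P x).
have regMR : regM g MR.
  move=> a b; have h := M0_reg kk (st_reg st) (R a) b.
  by apply: reg_ext h _; move=> x _; rewrite /MR [RHS]mxE.
have regP : regM g P.
  by move=> a b; apply: reg_ext (regMR a (J b)) _; move=> x _; rewrite /P [RHS]mxE.
have regD : reg g D by apply: reg_det.
have [AD [E hAD]] := regD.
pose pi x := fun j => if (blk j < k)%N then x j else x0 j.
have [AD' hAD'] : exists AD' : {mpoly K[N]}, forall x, AD'.@[x] = AD.@[pi x].
  have [A hA] : exists A : {mpoly K[N]}, forall x, AD.@[pi x] = A.@[x].
    apply: reg1; apply: reg_meval => j.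
    by rewrite /pi; case: (blk j < k)%N; [exact: reg_X | exact: reg_cst].
  by exists A => x; rewrite hA.
have hpi : forall x, g.@[x] != 0 -> g.@[pi x] = g.@[x] /\ D (pi x) = D x.
  move=> x gx.
  have agr : forall j, (blk j < k)%N -> pi x j = x j by move=> j h; rewrite /pi h.
  have [e1 e2] := st_dep st agr.
  split => //; rewrite /D /P /MR (@M0_dep kk (Phi (pi x)) (Phi x)) // => j h; exact: e2.
have hADg : forall x, g.@[x] != 0 -> g.@[x] ^+ E * D x = AD'.@[x].
  move=> x gx; have [e1 e2] := hpi x gx; rewrite hAD' -hAD; last by rewrite e1.
  by rewrite e1 e2.
pose g' := g * AD'.
have good : forall x, g'.@[x] != 0 -> g.@[x] != 0 /\ D x != 0.
  move=> x; rewrite mevalM mulf_eq0 negb_or => /andP[gx ax]; split => //.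
  by apply: contraNneq ax => D0; rewrite -hADg // D0 mulr0.
have Punit : forall x, g'.@[x] != 0 -> P x \in unitmx.
  by move=> x /good[_ Dx]; rewrite unitmxE unitfE.
have Mw0 : forall x, g'.@[x] != 0 -> M0 kk (Phi x) *m w x = 0.
  move=> x gx'; have [gx _] := good x gx'.
  have MRw : MR x *m w x = 0.
    rewrite /w mulmxBr !mulmxA PE mulmxV ?mul1mx ?subrr //; exact: Punit.
  have rkMR : (r <= \rank (MR x))%N.
    apply: leq_trans (mxrankM_maxl (MR x) E0); by rewrite PE (mxrank_unit (Punit x gx')).
  have sub : (MR x <= M0 kk (Phi x))%MS by exact: rowsub_sub.
  have sub2 : (M0 kk (Phi x) <= MR x)%MS.
    have [_ eqC] := mxrank_leqif_sup sub.
    rewrite -eqC eqn_leq mxrankS //=; exact: leq_trans (x0max x gx) rkMR.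
  by have [X ->] := submxP sub2; rewrite -mulmxA MRw mulmx0.
have regu : regM g' u.
  move=> i j; apply: reg_ext (_ : reg g' (fun x =>
     if (blk i == kk) && (i \notin codom J) then x i - v i else 0)) _;
    last by move=> x _; rewrite mxE.
  case: ((blk i == kk) && (i \notin codom J)); last exact: reg_cst.
  by apply: reg_add; [exact: reg_X | exact: reg_cst].
have regInv : regM g' (fun x => invmx (P x)).
  apply: regM_ext (regM_scale (reg_inv hADg) (regM_mono AD' (regM_adj regP))) _.
  by move=> x gx'; rewrite /invmx Punit.
have regw : regM g' w.
  apply: regM_add => //; apply: regM_opp; apply: regM_mul; first exact: regM_cst.
  apply: regM_mul => //; apply: regM_mul => //; exact: regM_mono.
pose I' := [seq j <- I | ~~ ((blk j == kk) && (j \in codom J))].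
exists g', Phi', I'; split.
- move=> x gx' e; have [gx _] := good x gx'.
  have key := @aff e kk (vset (fun b => k.+1 <= b)%N (Phi' x))
     (vset (fun b => k.+1 <= b)%N (Phi' x)) (fun _ _ => erefl).
  have ev : vset (pred1 kk) (vset (fun b => k.+1 <= b)%N (Phi' x)) =
            vset (fun b => k <= b)%N (Phi x).
    apply: functional_extensionality => j; rewrite /vset /= /Phi' hkk.
    by case: (ltngtP (blk j) k).
  rewrite ev (st_eq st) // in key; rewrite key.
  rewrite (eq_bigr (fun j => M0 kk (Phi x) e j * w x j 0)); last first.
    move=> j hj; rewrite mxE hj /vset /Phi' hj.
    have -> : (k < blk j)%N = false by move: hj; rewrite hkk; lia.
    congr (_ * _); first by rewrite -(st_eq st gx e).
    by rewrite addrC addKr.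
  have -> : \sum_(j | blk j == kk) M0 kk (Phi x) e j * w x j 0 =
            (M0 kk (Phi x) *m w x) e 0.
    rewrite mxE [RHS](bigID (fun j => blk j == kk)) /= [X in _ = _ + X]big1 ?addr0 //.
    by move=> j /negbTE h; rewrite mxE h mul0r.
  by rewrite Mw0 // mxE addr0.
- move=> j; rewrite /Phi'; case: (blk j == kk); last exact: (reg_mono AD' (st_reg st j)).
  by apply: reg_add; [exact: reg_cst | exact: regw].
- move=> j x h; rewrite /Phi' hkk.
  have -> : (blk j == k :> nat) = false by lia.
  by apply: (st_id st); lia.
- move=> x x' agr.
  have agr' : forall j, (blk j < k)%N -> x j = x' j by move=> j h; apply: agr; lia.
  have [e1 e2] := st_dep st agr'.
  have epi : pi x = pi x'.
    by apply: functional_extensionality => j; rewrite /pi; case: ifP => // /agr'.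
  split; first by rewrite !mevalM e1 !hAD' epi.
  move=> j hj; rewrite /Phi'; case: ifP => hb; last first.
    by apply: e2; move: hb; rewrite hkk; lia.
  have eM : M0 kk (Phi x) = M0 kk (Phi x') by apply: M0_dep => i hi; apply: e2.
  have eu : u x = u x'.
    apply/matrixP => i l; rewrite !mxE; case: ifP => // /andP[hi _].
    by rewrite agr //; move: hi; rewrite hkk; lia.
  by rewrite /w /P /MR eM eu.
- exists x0; rewrite mevalM mulf_neq0 // -hADg // mulf_neq0 ?expf_neq0 //.
  by rewrite -unitfE -unitmxE.
- move=> p Hp.
  pose yb y := fun j => if blk j == kk then v j else y j.
  have [p' hp'] : exists p' : {mpoly K[N]}, forall y, p'.@[y] = p.@[yb y].
    have [A hA] : exists A : {mpoly K[N]}, forall y, p.@[yb y] = A.@[y].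
      apply: reg1; apply: reg_meval => j.
      by rewrite /yb; case: (blk j == kk); [exact: reg_cst | exact: reg_X].
    by exists A => y; rewrite hA.
  have [Dp hDp] : exists Dp : {mpoly K[N]},
      forall y, Dp.@[y] = \det (colsub J (rowsub R (M0 kk y))).
    have [A hA] : exists A : {mpoly K[N]},
        forall y, \det (colsub J (rowsub R (M0 kk y))) = A.@[y].
      apply: reg1; apply: reg_det => a b.
      apply: reg_ext (M0_reg kk (fun j => @reg_X K N 1 j) (R a) (J b)) _.
      by move=> y _; rewrite [RHS]mxE [RHS]mxE.
    by exists A => y; rewrite hA.
  have KP := @img_prime K Kinf N pred0 x0 g Phi (st_reg st) (ex_intro _ x0 (conj (fun j (h : false) => match h with end) gx0)).
  have H : forall y, img pred0 x0 g Phi y -> p'.@[y] * Dp.@[y] = 0.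
    move=> _ [x [_ [gx ->]]]; rewrite hDp.
    have [->|Dn] := eqVneq (\det (colsub J (rowsub R (M0 kk (Phi x))))) 0; first by rewrite mulr0.
    pose xh := fun j => if blk j == kk then v j else x j.
    have agr : forall j, (blk j < k)%N -> xh j = x j.
      move=> j h; rewrite /xh; have -> : (blk j == kk) = false by rewrite hkk; lia.
      by [].
    have [e1 e2] := st_dep st agr.
    have epi : pi xh = pi x.
      by apply: functional_extensionality => j; rewrite /pi; case: ifP => // /agr.
    have gxh' : g'.@[xh] != 0.
      rewrite mevalM e1 hAD' epi -hAD' -hADg // mulf_neq0 // mulf_neq0 ?expf_neq0 //.
    have eu : u xh = 0.
      apply/matrixP => i l; rewrite !mxE; case: ifP => // /andP[hi _].
      by rewrite /xh hi subrr.
    have ew : w xh = 0 by rewrite /w eu !mulmx0 subr0.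
    have := Hp xh gxh'; rewrite -[X in X = 0 -> _](@meval_eq _ _ (yb (Phi x))).
      by rewrite -hp' => ->; rewrite mul0r.
    move=> j; rewrite /yb /Phi' ew mxE addr0; case: ifP => // hb.
    case: (ltnP (blk j) k) => h; first by rewrite e2.
    rewrite !(st_id st) // /xh hb //.
  case: (KP _ _ H) => [h|h].
    rewrite -(@meval_eq _ _ (yb v)); first by rewrite -hp'; apply: (st_cl st) => x gx; apply: h; exists x.
    by move=> j; rewrite /yb; case: ifP.
  have := h (Phi x0); rewrite hDp => /(_ (ex_intro _ x0 (conj (fun j (h : false) => match h with end) (conj gx0 erefl)))).
  move/eqP => D0; exfalso; move: PJ0; rewrite unitmxE unitfE.
  by move=> /negP; apply.
- exact: filter_uniq (st_uniq st).
- move=> j; rewrite mem_filter => /andP[nb jI] x; rewrite /Phi'; case: ifP => hb; last exact: (st_free st).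
  rewrite hb /= in nb; rewrite /w !mxE hb nb /= big1 ?subr0; first by rewrite addrC subrK.
  move=> l _; rewrite !mxE.
  have -> : (j == J l) = false.
    by apply/negP => /eqP ej; move: nb; rewrite ej codom_f.
  by rewrite mul0r.
- have hr : (r <= m)%N := rank_leq_row _.
  have cnt : (size I <= size I' + r)%N.
    rewrite size_filter -(count_predC (fun j => ~~ ((blk j == kk) && (j \in codom J))) I).
    rewrite leq_add2l -size_filter.
    apply: leq_trans (_ : (size (codom J) <= r)%N); last by rewrite size_codom card_ord.
    apply: uniq_leq_size; first exact: filter_uniq (st_uniq st).
    by move=> j; rewrite mem_filter /= negbK => /andP[/andP[_ h] _].
  have := st_size st; rewrite mulSn; lia.
- move=> j h; rewrite mem_filter (st_hi st); last by lia.
  have -> : (blk j == kk) = false by rewrite hkk; lia.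
  by [].
Qed.



Lemma stage_all k : (k <= d)%N -> exists g Phi I, stage k g Phi I.
Proof.
elim: k => [_|k IH kd]; first by exists 1, (fun x => x), (enum 'I_N); exact: stage0.
have [g [Phi [I st]]] := IH (ltnW kd).
exact: stage_step kd st.
Qed.

End Main.

Theorem theorem1p2 (K : fieldType)
  (K_infinite : forall s : seq K, exists x : K, x \notin s)
  (L : closedFieldType) (iota : {rmorphism K -> L})
  (L_alg : is_alg_closure iota)
  (d : nat) (n : 'I_d -> nat) (m : nat)
  (f : 'I_m -> ('I_(totdim n) -> K) -> K)
  (f_ma : forall k, multi_affine (f k))
  (c : 'I_m -> K) (v : 'I_(totdim n) -> K)
  (hv : forall k, f k v = c k) :
  let Z := fun w : 'I_(totdim n) -> K => forall k, f k w = c k in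
  exists W : ('I_(totdim n) -> K) -> Prop,
    psubset W Z /\
    zcl iota W (fun i => iota (v i)) /\
    zirreducible (zcl iota W) /\
    zcodim_le (zcl iota W) (2 ^ d * m)%N.
Proof.
move=> Z.
have [g [Phi [I st]]] := stage_all K_infinite f_ma hv (leqnn d).
have [x0 gx0] := st_ne st.
exists (img pred0 x0 g Phi); split.
  move=> y [x [_ [gx ->]]] e; have := st_eq st gx e.
  have -> : vset v (fun b => d <= b)%N (Phi x) = Phi x.
    apply: functional_extensionality => j; rewrite /vset.
    by have -> : (d <= blk j)%N = false by rewrite leqNgt ltn_ord.
  by [].
split.
  move=> p hp; rewrite map_meval (st_cl st) ?rmorph0 // => x gx.
  by apply: hp; exists x.
have KP : Kprime (img pred0 x0 g Phi).
  apply: (@img_prime K K_infinite _ pred0 x0 g Phi (st_reg st)).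
  by exists x0; split.
split; first by apply: zcl_irr => //; exists (Phi x0), x0.
exists (size I); split.
  exact: (@chain_dim K L iota _ K_infinite g Phi I x0 (st_uniq st) (st_reg st) (st_free st) gx0).
have hs := st_size st.
have hd : (d <= 2 ^ d)%N by apply: ltnW; apply: ltn_expl.
apply: leq_trans hs _; rewrite leq_add2l leq_mul2r hd orbT //.
Qed.
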